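(* Let $P(a,b)=\dfrac{a(1-b)}{a(1-b)+b(1-a)}$ (the James function) and let $0<c<1$. Then the level curve $\{(a,b)\in(0,1)^2 : P(a,b)=c\}$ is the graph of the unique solution $b=b(a)$, $0<a<1$, of the differential equation \[ \frac{db}{da}=\frac{b(1-b)}{a(1-a)} \] that passes through the point $(c,\tfrac12)$. *)

(* Defs.v *)
From Stdlib Require Import Reals.
Open Scope R_scope.

Definition james (a b : R) : R := a * (1 - b) / (a * (1 - b) + b * (1 - a)).

Definition solves_james_ode (f : R -> R) : Prop :=
  forall a, 0 < a < 1 -> derivable_pt_lim f a (f a * (1 - f a) / (a * (1 - a))).

(* Main.v *)
Require Import Defs.
From Stdlib Require Import Reals Lra.
Open Scope R_scope.

Lemma dexp k x : derivable_pt_lim (fun y => exp (k * y)) x (exp (k*x) * k).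
Proof.
  apply (derivable_pt_lim_comp (fun y => k * y) exp x k (exp (k*x))).
  - pose proof (derivable_pt_lim_scal id k x 1 (derivable_pt_lim_id x)) as H.
    rewrite Rmult_1_r in H. exact H.
  - apply derivable_pt_lim_exp.
Qed.

Lemma dV h m k x : derivable_pt_lim h x (m * h x) ->
  derivable_pt_lim (fun y => h y * h y * exp (k * y)) x
   (h x * h x * exp (k * x) * (2 * m + k)).
Proof.
  intro H.
  assert (H1 := derivable_pt_lim_mult h h x _ _ H H).
  assert (H2 := derivable_pt_lim_mult (h * h)%F (fun y => exp (k*y)) x _ _ H1 (dexp k x)).
  unfold mult_fct in H2. replace (h x * h x * exp (k * x) * (2 * m + k)) with
   ((m * h x * h x + h x * (m * h x)) * exp (k * x) + h x * h x * (exp (k * x) * k)) by ring.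
  exact H2.
Qed.

Lemma key_right h m M p q : p < q -> (forall x, p<=x<=q -> derivable_pt_lim h x (m x * h x)) ->
  (forall x, p<=x<=q -> m x <= M) -> h p = 0 -> h q = 0.
Proof.
  intros pq Hd Hm hp.
  destruct (MVT_cor2 (fun y => h y * h y * exp ((-(2*M)) * y))
     (fun y => h y * h y * exp ((-(2*M)) * y) * (2 * m y + (-(2*M)))) p q pq) as [xi [E Hxi]].
  { intros x Hx. apply dV. apply Hd; auto. }
  rewrite hp in E.
  assert (0 <= h xi * h xi) by nra.
  assert (0 < exp (- (2 * M) * xi)) by apply exp_pos.
  assert (0 < exp (- (2 * M) * q)) by apply exp_pos.
  assert (m xi <= M) by (apply Hm; lra).
  assert (h xi * h xi * exp (- (2 * M) * xi) * (2 * m xi + - (2 * M)) * (q - p) <= 0).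
  { assert (0 <= h xi * h xi * exp (- (2 * M) * xi)) by nra.
    assert (0 <= h xi * h xi * exp (- (2 * M) * xi) * (2 * M - 2 * m xi)) by nra. nra. }
  assert (h q * h q * exp (- (2 * M) * q) <= 0) by nra.
  assert (h q * h q <= 0) by nra. nra.
Qed.

Lemma key_left h m M p q : p < q -> (forall x, p<=x<=q -> derivable_pt_lim h x (m x * h x)) ->
  (forall x, p<=x<=q -> - M <= m x) -> h q = 0 -> h p = 0.
Proof.
  intros pq Hd Hm hq.
  destruct (MVT_cor2 (fun y => h y * h y * exp ((2*M) * y))
     (fun y => h y * h y * exp ((2*M) * y) * (2 * m y + (2*M))) p q pq) as [xi [E Hxi]].
  { intros x Hx. apply dV. apply Hd; auto. }
  rewrite hq in E.
  assert (0 <= h xi * h xi) by nra.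
  assert (0 < exp ((2 * M) * xi)) by apply exp_pos.
  assert (0 < exp ((2 * M) * p)) by apply exp_pos.
  assert (- M <= m xi) by (apply Hm; lra).
  assert (0 <= h xi * h xi * exp ((2 * M) * xi) * (2 * m xi + (2 * M)) * (q - p)).
  { assert (0 <= h xi * h xi * exp ((2 * M) * xi)) by nra.
    assert (0 <= h xi * h xi * exp ((2 * M) * xi) * (2 * M + 2 * m xi)) by nra. nra. }
  assert (h p * h p * exp ((2 * M) * p) <= 0) by nra.
  assert (h p * h p <= 0) by nra. nra.
Qed.
Lemma cm (g : R -> R) x : continuity_pt g x -> x*(1-x) <> 0 ->
  continuity_pt (fun y => (1 - y - g y) / (y * (1 - y))) x.
Proof.
  intros Hg Hx.
  apply continuity_pt_div; [| |exact Hx].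
  - apply continuity_pt_minus; [|exact Hg].
    apply continuity_pt_minus; [apply continuity_pt_const; intros a b; reflexivity|apply derivable_continuous_pt, derivable_pt_id].
  - apply continuity_pt_mult; [apply derivable_continuous_pt, derivable_pt_id|].
    apply continuity_pt_minus; [apply continuity_pt_const; intros a b; reflexivity|apply derivable_continuous_pt, derivable_pt_id].
Qed.
Lemma daff al be x : derivable_pt_lim (fun y => al * y + be) x al.
Proof.
  pose proof (derivable_pt_lim_plus (mult_real_fct al id) (fct_cte be) x _ _
    (derivable_pt_lim_scal id al x 1 (derivable_pt_lim_id x)) (derivable_pt_lim_const be x)) as H.
  replace (al * 1 + 0) with al in H by ring. exact H.
Qed.

Lemma dD (g : R -> R) c x gp : derivable_pt_lim g x gp ->
  derivable_pt_lim (fun y => g y * ((1-2*c)*y + c) - ((1-c) * y + 0)) x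
   (gp * ((1-2*c)*x + c) + g x * (1-2*c) - (1-c)).
Proof.
  intro H.
  exact (derivable_pt_lim_minus _ _ x _ _
     (derivable_pt_lim_mult g (fun y => (1-2*c)*y + c) x _ _ H (daff (1-2*c) c x))
     (daff (1-c) 0 x)).
Qed.

Lemma df c x : (1-2*c)*x + c <> 0 ->
  derivable_pt_lim (fun y => ((1-c)*y+0) / ((1-2*c)*y + c)) x
   (((1-c) * ((1-2*c)*x + c) - (1-2*c) * ((1-c)*x+0)) / Rsqr ((1-2*c)*x + c)).
Proof.
  intro H.
  exact (derivable_pt_lim_div _ _ x _ _ (daff (1-c) 0 x) (daff (1-2*c) c x) H).
Qed.

Theorem proposition3p3 (c : R) (hc : 0 < c < 1) :
  exists f : R -> R,
    solves_james_ode f /\ f c = 1 / 2 /\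
    (forall g : R -> R, solves_james_ode g -> g c = 1 / 2 ->
       forall a, 0 < a < 1 -> g a = f a) /\
    (forall a b : R,
       (0 < a < 1 /\ 0 < b < 1 /\ james a b = c) <-> (0 < a < 1 /\ b = f a)).
Proof.
  exists (fun y => ((1-c)*y+0)/((1-2*c)*y+c)).
  assert (Hden : forall y, 0 < y < 1 -> 0 < (1-2*c)*y + c) by (intros; nra).
  split; [|split; [|split]].
  - intros a Ha. pose proof (Hden a Ha).
    assert (E : ((1-c)*a+0)/((1-2*c)*a+c) * (1 - ((1-c)*a+0)/((1-2*c)*a+c)) / (a * (1 - a))
       = ((1-c) * ((1-2*c)*a + c) - (1-2*c) * ((1-c)*a+0)) / Rsqr ((1-2*c)*a + c)).
    { unfold Rsqr. field. repeat split; nra. }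
    rewrite E. apply df. lra.
  - field. nra.
  - intros g Hg Hgc a Ha.
    set (D := fun y => g y * ((1-2*c)*y + c) - ((1-c) * y + 0)).
    set (m := fun y => (1 - y - g y) / (y * (1 - y))).
    assert (HD : forall x, 0 < x < 1 -> derivable_pt_lim D x (m x * D x)).
    { intros x Hx. pose proof (dD g c x _ (Hg x Hx)) as H.
      replace (m x * D x) with
        (g x * (1 - g x) / (x * (1 - x)) * ((1 - 2 * c) * x + c) + g x * (1 - 2 * c) - (1 - c)).
      exact H. unfold m, D. field. nra. }
    assert (Hcont : forall x, 0 < x < 1 -> continuity_pt m x).
    { intros x Hx. apply cm; [|nra].
      apply derivable_continuous_pt. exists (g x * (1 - g x) / (x * (1 - x))). apply Hg; auto. }
    assert (HDc : D c = 0) by (unfold D; rewrite Hgc; field).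
    assert (HDa : D a = 0).
    { destruct (Rtotal_order c a) as [lt|[eq|gt]].
      - destruct (continuity_ab_maj m c a) as [Mx [HM HMx]]; [lra| intros; apply Hcont; lra|].
        apply (key_right D m (m Mx) c a lt); auto.
        intros; apply HD; lra.
      - subst; auto.
      - destruct (continuity_ab_maj (fun y => - m y) a c) as [Mx [HM HMx]]; [lra|
          intros; apply continuity_pt_opp; apply Hcont; lra|].
        apply (key_left D m (- m Mx) a c gt); auto.
        intros; apply HD; lra.
        intros x Hx; specialize (HM x Hx); simpl in HM; lra. }
    unfold D in HDa. pose proof (Hden a Ha).
    apply (Rmult_eq_reg_r ((1-2*c)*a + c)); [|lra].
    field_simplify; lra.
  - intros a b; split.
    + intros [Ha [Hb Hj]]. split; auto. pose proof (Hden a Ha).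
      unfold james in Hj.
      assert (0 < a * (1 - b) + b * (1 - a)) by nra.
      apply (Rmult_eq_reg_r ((1-2*c)*a + c)); [|lra].
      field_simplify; [|lra].
      assert (a * (1 - b) = c * (a * (1 - b) + b * (1 - a))).
      { rewrite <- Hj. field. lra. }
      nra.
    + intros [Ha Hb]. pose proof (Hden a Ha). subst b.
      split; auto. split.
      * split.
        -- apply Rdiv_lt_0_compat; nra.
        -- apply (Rmult_lt_reg_r ((1-2*c)*a + c)); [lra|].
           field_simplify; nra.
      * unfold james. field_simplify; try nra. field. nra.
Qed.
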